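(* Let $G$ be a graph with a linear order $<$ on $V(G)$ satisfying the X-property, and let $s<t$ be vertices with $d^*:=\operatorname{dist}(s,t)<\infty$. Then there is a shortest $s$-$t$ path $P=p_0,p_1,\dots,p_{d^*}$ (with $p_0=s$, $p_{d^*}=t$) such that (i) $p_i\in\{\alpha_s(i),\beta_s(i)\}$ for all $i<\operatorname{righti}(P)$, and (ii) $p_i\in\{\alpha_t(d^*-i),\beta_t(d^*-i)\}$ for all $i>\operatorname{lefti}(P)$.
   Context: The X-property: for all vertices $p<q<r<s$, if $\{p,r\}\in E(G)$ and $\{q,s\}\in E(G)$ then $\{p,s\}\in E(G)$. $\operatorname{dist}$ is the number of edges of a shortest path. $\operatorname{lefti}(P)$ / $\operatorname{righti}(P)$ is the index of the leftmost / rightmost vertex of $P$ w.r.t. $<$. For an integer $k\ge 0$: $\alpha_s(k)$ (resp. $\beta_s(k)$) is the leftmost (resp. rightmost) vertex reachable from $s$ by a path of length at most $k$ using only vertices $v\le t$; $\alpha_t(k)$ (resp. $\beta_t(k)$) is the rightmost (resp. leftmost) vertex reachable from $t$ by a path of length at most $k$ using only vertices $v\ge s$. *)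

(* Defs.v *)
From mathcomp Require Import all_boot all_order.
Set Implicit Arguments. Unset Strict Implicit. Unset Printing Implicit Defensive.
Import Order.TTheory.
Local Open Scope order_scope.

Definition simple_graph (T : Type) (e : rel T) : Prop :=
  irreflexive e /\ symmetric e.

Definition X_property (d : Order.disp_t) (T : orderType d) (e : rel T) : Prop :=
  forall p q r s : T, p < q -> q < r -> r < s -> e p r -> e q s -> e p s.

(* A walk from x is encoded as x :: q with path e x q; its length is size q,
   its end vertex is last x q. *)

Definition is_dist (T : eqType) (e : rel T) (x y : T) (d : nat) : Prop :=
  (exists q : seq T, [/\ path e x q, last x q = y & size q = d]) /\
  (forall q : seq T, path e x q -> last x q = y -> d <= size q)%N.

Definition reach_in (T : eqType) (e : rel T) (P : pred T) (x : T) (k : nat)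
  (v : T) : Prop :=
  exists q : seq T, [/\ path e x q, last x q = v, (size q <= k)%N & all P (x :: q)].

Section Extremal.
Context (d : Order.disp_t) (T : orderType d) (e : rel T) (s t : T).

Definition is_alpha_s (k : nat) (v : T) : Prop :=
  reach_in e (fun w => w <= t) s k v /\
  forall w, reach_in e (fun w => w <= t) s k w -> v <= w.
Definition is_beta_s (k : nat) (v : T) : Prop :=
  reach_in e (fun w => w <= t) s k v /\
  forall w, reach_in e (fun w => w <= t) s k w -> w <= v.
Definition is_alpha_t (k : nat) (v : T) : Prop :=
  reach_in e (fun w => s <= w) t k v /\
  forall w, reach_in e (fun w => s <= w) t k w -> w <= v.
Definition is_beta_t (k : nat) (v : T) : Prop :=
  reach_in e (fun w => s <= w) t k v /\
  forall w, reach_in e (fun w => s <= w) t k w -> v <= w.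
End Extremal.

Definition righti (d : Order.disp_t) (T : orderType d) (x : T) (q : seq T) : nat :=
  index (foldr Order.max x q) (x :: q).
Definition lefti (d : Order.disp_t) (T : orderType d) (x : T) (q : seq T) : nat :=
  index (foldr Order.min x q) (x :: q).

(* Main.v *)
Require Import Defs.
From mathcomp Require Import all_boot all_order.
From mathcomp Require Import zify.
From Stdlib Require Import Classical.
Set Implicit Arguments. Unset Strict Implicit. Unset Printing Implicit Defensive.
Import Order.TTheory.

Ltac clear_ord := repeat match goal with
  | H : is_true (@Order.lt _ _ _ _) |- _ => clear H
  | H : is_true (@Order.le _ _ _ _) |- _ => clear H
  | H : is_true (_ && _) |- _ => clear H
  | H : is_true (~~ _) |- _ => clear H
  | H : is_true (_ != _) |- _ => clear H
  | H : _ \/ _ |- _ => clear H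
  end.
Ltac nlia := clear_ord; lia.

Section Walks.
Variables (T : Type) (e : rel T).
Definition W (g : nat -> T) (n : nat) := forall i, i < n -> e (g i) (g i.+1).
Definition mkq (g : nat -> T) n := [seq g i | i <- iota 1 n].
Lemma mkq_size g n : size (mkq g n) = n.
Proof. by rewrite size_map size_iota. Qed.
Lemma mkq_nth x g n i : g 0 = x -> i <= n -> nth x (x :: mkq g n) i = g i.
Proof.
move=> g0; case: i => [|i] Hi /=; first by rewrite g0.
rewrite (nth_map 0); last by rewrite size_iota.
by rewrite nth_iota.
Qed.
Lemma mkq_path x g n : g 0 = x -> W g n -> path e x (mkq g n).
Proof.
move=> g0 Wg; apply/(pathP x) => i; rewrite mkq_size => Hi.
have -> : nth x (mkq g n) i = nth x (x :: mkq g n) i.+1 by [].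
by rewrite !mkq_nth //; [apply: Wg | apply: ltnW].
Qed.
Lemma mkq_last x g n : g 0 = x -> last x (mkq g n) = g n.
Proof. by move=> g0; rewrite (last_nth x) mkq_size mkq_nth. Qed.
Definition fq (x : T) (q : seq T) i := nth x (x :: q) i.
Lemma fq_W x q : path e x q -> W (fq x q) (size q).
Proof. by move/(pathP x) => H i Hi; apply: H. Qed.
Lemma fq_last x q : fq x q (size q) = last x q.
Proof. by rewrite /fq (last_nth x). Qed.
End Walks.

Definition rchf (T : Type) (e : rel T) (P : pred T) a k v :=
  exists g n, [/\ g 0 = a, g n = v, n <= k, W e g n & forall i, i <= n -> P (g i)].

Lemma reach_iff (T : eqType) (e : rel T) (P : pred T) a k v :
  reach_in e P a k v <-> rchf e P a k v.
Proof.
split.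
- case=> q [pq lq sq aq]; exists (fq a q), (size q); split => //.
  + by rewrite fq_last.
  + exact: fq_W.
  + move=> i Hi; move/(all_nthP a): aq; apply; by [].
- case=> g [n [g0 gn nk Wg Pg]]; exists (mkq g n); split.
  + exact: mkq_path.
  + by rewrite mkq_last.
  + by rewrite mkq_size.
  + apply/(all_nthP a) => i; rewrite /= mkq_size ltnS => Hi.
    by rewrite mkq_nth //; apply: Pg.
Qed.

Lemma ex_minP (disp : Order.disp_t) (T : finOrderType disp) (P : T -> Prop) x :
  P x -> exists m, P m /\ forall y, P y -> (m <= y)%O.
Proof.
suff H : forall n x, #|[pred y | (y < x)%O]| <= n -> P x ->
  exists m, P m /\ forall y, P y -> (m <= y)%O by apply: H.
elim=> [|n IH] {}x Hn Px.
- exists x; split => // y Py; rewrite leNgt; apply/negP => yx.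
  have : 0 < #|[pred y | (y < x)%O]| by apply/card_gt0P; exists y.
  by rewrite leqn0 in Hn; rewrite (eqP Hn).
- case: (classic (exists y, P y /\ (y < x)%O)) => [[y [Py yx]]|H].
  + apply: (IH y) => //.
    have : #|[pred z | (z < y)%O]| < #|[pred z | (z < x)%O]|.
      apply: proper_card; apply/properP; split.
      * by apply/subsetP => z; rewrite !inE => zy; apply: lt_trans zy yx.
      * by exists y; rewrite !inE ?yx ?ltxx.
    by move=> H; rewrite -ltnS; apply: leq_trans H Hn.
  + exists x; split => // y Py; rewrite leNgt; apply/negP => yx.
    by apply: H; exists y.
Qed.

Lemma ex_maxP (disp : Order.disp_t) (T : finOrderType disp) (P : T -> Prop) x :
  P x -> exists m, P m /\ forall y, P y -> (y <= m)%O.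
Proof. exact: (@ex_minP _ T^d P x). Qed.
Section Main.
Variables (disp : Order.disp_t) (T : finOrderType disp) (e : rel T).
Hypothesis esym : symmetric e.
Hypothesis HX : X_property e.
Variables (s t : T).
Hypothesis Hst : (s < t)%O.
Variable dd : nat.
Hypothesis dmin : forall g n, g 0 = s -> g n = t -> W e g n -> dd <= n.

Definition rs k v := rchf e (fun w => (w <= t)%O) s k v.
Definition rch k v := exists g n, [/\ g 0 = s, g n = v, n <= k & W e g n].
Definition SP f := [/\ f 0 = s, f dd = t & W e f dd].
Definition maxidx (f : nat -> T) R := R <= dd /\ forall i, i <= dd -> (f i <= f R)%O.
Definition minidx (f : nat -> T) L := L <= dd /\ forall i, i <= dd -> (f L <= f i)%O.

Lemma W_le g n m : W e g n -> m <= n -> W e g m.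
Proof. by move=> Wg mn i Hi; apply: Wg; apply: leq_trans Hi mn. Qed.

Lemma alphaE k a : is_alpha_s e s t k a <-> rs k a /\ forall w, rs k w -> (a <= w)%O.
Proof.
rewrite /is_alpha_s /rs; split=> [[H1 H2]|[H1 H2]]; split.
- by apply/reach_iff.
- by move=> w /reach_iff; apply: H2.
- by apply/reach_iff.
- by move=> w /reach_iff; apply: H2.
Qed.
Lemma betaE k a : is_beta_s e s t k a <-> rs k a /\ forall w, rs k w -> (w <= a)%O.
Proof.
rewrite /is_beta_s /rs; split=> [[H1 H2]|[H1 H2]]; split.
- by apply/reach_iff.
- by move=> w /reach_iff; apply: H2.
- by apply/reach_iff.
- by move=> w /reach_iff; apply: H2.
Qed.

Lemma rs_s k : rs k s.
Proof. exists (fun _ => s), 0; split; [by []|by []|by []|by move=> i|by move=> i _; apply: ltW]. Qed.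

Lemma ex_alpha k : exists a, is_alpha_s e s t k a.
Proof. have [m [H1 H2]] := ex_minP (rs_s k); exists m; exact/alphaE. Qed.
Lemma ex_beta k : exists a, is_beta_s e s t k a.
Proof. have [m [H1 H2]] := ex_maxP (rs_s k); exists m; exact/betaE. Qed.

Lemma rs_rch k v : rs k v -> rch k v.
Proof. by case=> g [n [g0 gn nk Wg _]]; exists g, n. Qed.
Lemma rs_le k v : rs k v -> (v <= t)%O.
Proof. by case=> g [n [g0 gn nk Wg Pg]]; rewrite -gn; apply: Pg. Qed.
Lemma rs_mono k k' v : rs k v -> k <= k' -> rs k' v.
Proof. by case=> g [n [g0 gn nk Wg Pg]] kk; exists g, n; split => //; apply: leq_trans kk. Qed.
Lemma rch_mono k k' v : rch k v -> k <= k' -> rch k' v.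
Proof. by case=> g [n [g0 gn nk Wg]] kk; exists g, n; split => //; apply: leq_trans kk. Qed.
Lemma rs0 v : rs 0 v -> v = s.
Proof. by case=> g [n [g0 gn nk Wg Pg]]; move: nk; rewrite leqn0 => /eqP n0; rewrite -gn n0. Qed.
Lemma rs_prefix g n i : g 0 = s -> W e g n -> (forall j, j <= n -> (g j <= t)%O) ->
  i <= n -> rs i (g i).
Proof.
move=> g0 Wg Pg Hi; exists g, i; split => //; first exact: W_le Wg Hi.
by move=> j Hj; apply: Pg; apply: leq_trans Hj Hi.
Qed.
Lemma rch_prefix g n i : g 0 = s -> W e g n -> i <= n -> rch i (g i).
Proof. by move=> g0 Wg Hi; exists g, i; split => //; exact: W_le Wg Hi. Qed.

Definition ext1 (g : nat -> T) n w := fun i => if i <= n then g i else w.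
Lemma ext1_W g n w : W e g n -> e (g n) w -> W e (ext1 g n w) n.+1.
Proof.
move=> Wg ew i Hi; rewrite /ext1.
case: (ltngtP i n) => [iln|nli|->].
- by apply: Wg.
- by move: Hi; rewrite ltnS leqNgt nli.
- by [].
Qed.
Lemma rch_ext k u w : rch k u -> e u w -> rch k.+1 w.
Proof.
case=> g [n [g0 gn nk Wg]] euw; exists (ext1 g n w), n.+1; split.
- by rewrite /ext1.
- by rewrite /ext1 ltnn.
- by [].
- by rewrite -gn in euw; apply: ext1_W.
Qed.
Lemma rs_ext k u w : rs k u -> e u w -> (w <= t)%O -> rs k.+1 w.
Proof.
case=> g [n [g0 gn nk Wg Pg]] euw wt; exists (ext1 g n w), n.+1; split.
- by rewrite /ext1.
- by rewrite /ext1 ltnn.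
- by [].
- by rewrite -gn in euw; apply: ext1_W.
- by move=> i Hi; rewrite /ext1; case: ifP => // /Pg.
Qed.

Lemma rs_walk k v : rs k v -> exists g n, [/\ g 0 = s, g n = v, n <= k, W e g n &
  forall i, i <= n -> rs i (g i)].
Proof.
case=> g [n [g0 gn nk Wg Pg]]; exists g, n; split => // i Hi.
exact: rs_prefix Wg Pg Hi.
Qed.

Lemma F0 f j m : SP f -> j <= dd -> rch m (f j) -> j <= m.
Proof.
case=> f0 fd Wf jd [g [n [g0 gn nm Wg]]].
pose h i := if i <= n then g i else f (i - n + j).
have h0 : h 0 = s by rewrite /h leq0n.
have hend : h (n + (dd - j)) = t.
  rewrite /h; case: ifP => H.
  + have -> : n + (dd - j) = n by nlia.
    by rewrite gn -fd; congr f; nlia.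
  + by have -> : n + (dd - j) - n + j = dd by nlia.
have hW : W e h (n + (dd - j)).
  move=> i Hi; rewrite /h.
  case: (ltngtP i n) => [iln|inl|ein].
  + by apply: Wg.
  + have -> : i.+1 - n + j = (i - n + j).+1 by nlia.
    apply: Wf; nlia.
  + rewrite ein gn.
    have -> : n.+1 - n + j = j.+1 by nlia.
    apply: Wf; nlia.
have := dmin h0 hend hW; nlia.
Qed.

Lemma F0e f j m z : SP f -> j <= dd -> rch m z -> e z (f j) -> j <= m.+1.
Proof. by move=> Sf jd rz ez; apply: (F0 Sf jd); apply: rch_ext rz ez. Qed.

Lemma SP_rch f i : SP f -> i <= dd -> rch i (f i).
Proof. by case=> f0 fd Wf Hi; apply: rch_prefix Wf Hi. Qed.

Lemma SP_inj f i j : SP f -> i <= dd -> j <= dd -> f i = f j -> i = j.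
Proof.
move=> Sf id jd E; apply/eqP; rewrite eqn_leq; apply/andP; split.
- by apply: (F0 Sf id); rewrite E; apply: SP_rch.
- by apply: (F0 Sf jd); rewrite -E; apply: SP_rch.
Qed.


Lemma bivt (h : nat -> bool) n : h 0 -> ~~ h n -> exists i, [/\ i < n, h i & ~~ h i.+1].
Proof.
elim: n => [|n IH] H0 Hn; first by rewrite H0 in Hn.
case Hn' : (h n).
- by exists n.
- have [i [i1 i2 i3]] := IH H0 (negbT Hn'); exists i; split => //; nlia.
Qed.

Lemma cross g n x y : W e g n -> (forall i, i <= n -> g i != x) ->
  ((g 0 < x < g n)%O \/ (g n < x < g 0)%O) -> e x y ->
  ((forall i, i <= n -> (g i < y)%O) -> exists i, [/\ i <= n, (g i < x)%O & e (g i) y]) /\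
  ((forall i, i <= n -> (y < g i)%O) -> exists i, [/\ i <= n, (x < g i)%O & e y (g i)]).
Proof.
move=> Wg gx Hx exy.
have [i [j [ii jj /andP [ix xj] eij]]] : exists i j, [/\ i <= n, j <= n, (g i < x < g j)%O & e (g i) (g j)].
  case: Hx => /andP [H1 H2].
  - have [i [i1 i2 i3]] := bivt (h := fun k => (g k < x)%O) H1 (negbT (lt_gtF H2)).
    exists i, i.+1; split; [nlia|nlia| |by apply: Wg].
    rewrite i2 /=; rewrite -leNgt in i3; rewrite lt_neqAle i3 andbT eq_sym gx //; nlia.
  - have [i [i1 i2 i3]] := bivt (h := fun k => (x < g k)%O) H2 (negbT (lt_gtF H1)).
    exists i.+1, i; split; [nlia|nlia| |by rewrite esym; apply: Wg].
    rewrite i2 andbT; rewrite -leNgt in i3; rewrite lt_neqAle i3 andbT gx //; nlia.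
split=> H.
- exists i; split => //.
  by apply: (HX ix xj (H j jj) eij exy).
- exists j; split => //.
  apply: (HX (H i ii) ix xj _ eij); by rewrite esym.
Qed.

Lemma hull_cross a b gA nA gB nB x y :
  gA 0 = s -> gA nA = a -> W e gA nA -> (forall i, i <= nA -> (a <= gA i <= b)%O) ->
  gB 0 = s -> gB nB = b -> W e gB nB -> (forall i, i <= nB -> (a <= gB i <= b)%O) ->
  (forall i, i <= nA -> gA i != x) -> (forall i, i <= nB -> gB i != x) ->
  (a < x < b)%O -> e x y -> (y < a \/ b < y)%O ->
  exists z, e z y /\ ((exists2 i, i <= nA & z = gA i) \/ (exists2 i, i <= nB & z = gB i)).
Proof.
move=> gA0 gAn WA hA gB0 gBn WB hB nxA nxB /andP [ax xb] exy ya.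
have xs : x != s by rewrite -gA0 eq_sym nxA.
case: (ltgtP s x) => [sx|xs'|sx]; last by rewrite sx eqxx in xs.
- have Hx : (gB 0 < x < gB nB)%O by rewrite gB0 gBn sx xb.
  have [C1 C2] := cross WB nxB (or_introl Hx) exy.
  case: ya => ya.
  + have [i [i1 _ i3]] := C2 (fun i Hi => lt_le_trans ya (proj1 (andP (hB i Hi)))).
    by exists (gB i); split; [rewrite esym | right; exists i].
  + have [i [i1 _ i3]] := C1 (fun i Hi => le_lt_trans (proj2 (andP (hB i Hi))) ya).
    by exists (gB i); split; [ | right; exists i].
- have Hx : (gA nA < x < gA 0)%O by rewrite gA0 gAn xs' ax.
  have [C1 C2] := cross WA nxA (or_intror Hx) exy.
  case: ya => ya.
  + have [i [i1 _ i3]] := C2 (fun i Hi => lt_le_trans ya (proj1 (andP (hA i Hi)))).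
    by exists (gA i); split; [rewrite esym | left; exists i].
  + have [i [i1 _ i3]] := C1 (fun i Hi => le_lt_trans (proj2 (andP (hA i Hi))) ya).
    by exists (gA i); split; [ | left; exists i].
Qed.


Lemma rs_hull k a b w : is_alpha_s e s t k a -> is_beta_s e s t k b -> rs k w -> (a <= w <= b)%O.
Proof. by move=> /alphaE [_ amin] /betaE [_ bmax] rw; rewrite amin ?bmax. Qed.

Lemma rs_walk2 k v : rs k v -> exists g n, [/\ g 0 = s, g n = v, n <= k, W e g n &
  forall i, i <= n -> rs k (g i) /\ rch i (g i)].
Proof.
move/rs_walk => [g [n [g0 gn nk Wg Hg]]]; exists g, n; split => // i Hi; split.
- by apply: rs_mono (Hg i Hi) _; nlia.
- exact: rs_rch (Hg i Hi).
Qed.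

Lemma out_hull (a b y : T) : (y != a) -> (y != b) -> ~~ (a < y < b)%O -> (y < a \/ b < y)%O.
Proof.
move=> ya yb; rewrite negb_and -!leNgt => /orP [H|H].
- by left; rewrite lt_neqAle ya H.
- by right; rewrite lt_neqAle eq_sym yb H.
Qed.

Lemma E1 f k j a b : SP f -> k < j -> j <= dd -> is_alpha_s e s t k a ->
  is_beta_s e s t k b -> (f j < a)%O \/ (b < f j)%O.
Proof.
move=> Sf kj jd Ha Hb.
have Sf' := Sf; case: Sf' => f0 fd Wf.
have [ra _] := proj1 (alphaE k a) Ha.
have [rb _] := proj1 (betaE k b) Hb.
have fnot : forall j' w, k < j' -> j' <= dd -> rch k w -> f j' != w.
  move=> j' w kj' jd' rw; apply/eqP => E; rewrite -E in rw.
  have := F0 Sf jd' rw; nlia.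
have [gA [nA [gA0 gAn nAk WA rA]]] := rs_walk2 ra.
have [gB [nB [gB0 gBn nBk WB rB]]] := rs_walk2 rb.
have hA : forall i, i <= nA -> (a <= gA i <= b)%O.
  by move=> i Hi; apply: rs_hull Ha Hb (proj1 (rA i Hi)).
have hB : forall i, i <= nB -> (a <= gB i <= b)%O.
  by move=> i Hi; apply: rs_hull Ha Hb (proj1 (rB i Hi)).
have bt : (b < t)%O.
  rewrite lt_neqAle (rs_le rb) andbT; rewrite -fd eq_sym.
  by apply: fnot (rs_rch rb) => //; nlia.
case: (ltP (f j) a) => [|af]; first by left.
right; rewrite ltNge; apply/negP => fb.
have ax : (a < f j)%O by rewrite lt_neqAle af andbT eq_sym (fnot _ _ kj jd (rs_rch ra)).
have xb : (f j < b)%O by rewrite lt_neqAle fb andbT (fnot _ _ kj jd (rs_rch rb)).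
have jd' : j < dd.
  rewrite ltn_neqAle jd andbT; apply/eqP => E; rewrite E fd in xb.
  by have := lt_trans xb bt; rewrite ltxx.
have h0 : (fun i => (a < f (j + i) < b)%O) 0 by rewrite /= addn0 ax xb.
have hn : ~~ (fun i => (a < f (j + i) < b)%O) (dd - j).
  rewrite /= (_ : j + (dd - j) = dd); last nlia.
  by rewrite fd negb_and -!leNgt (ltW bt) orbT.
have [i [i1 i2 i3]] := bivt (h := fun i => (a < f (j + i) < b)%O) (n := dd - j) h0 hn.
rewrite addnS in i3.
have ya : (f (j + i).+1 < a \/ b < f (j + i).+1)%O.
  have k1 : k < (j + i).+1 by nlia.
  have k2 : (j + i).+1 <= dd by nlia.
  exact: out_hull (fnot _ _ k1 k2 (rs_rch ra)) (fnot _ _ k1 k2 (rs_rch rb)) i3.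
have exy : e (f (j + i)) (f (j + i).+1) by apply: Wf; nlia.
have nxA : forall i', i' <= nA -> gA i' != f (j + i).
  by move=> i' Hi'; rewrite eq_sym; apply: fnot (rch_mono (proj2 (rA i' Hi')) _); nlia.
have nxB : forall i', i' <= nB -> gB i' != f (j + i).
  by move=> i' Hi'; rewrite eq_sym; apply: fnot (rch_mono (proj2 (rB i' Hi')) _); nlia.
have [z [ezy Hz]] := hull_cross gA0 gAn WA hA gB0 gBn WB hB nxA nxB i2 exy ya.
have rz : rch k z.
  case: Hz => [[i' Hi' ->]|[i' Hi' ->]].
  - by apply: rch_mono (proj2 (rA i' Hi')) _; nlia.
  - by apply: rch_mono (proj2 (rB i' Hi')) _; nlia.
have := F0e Sf (_ : (j + i).+1 <= dd) rz ezy; nlia.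
Qed.

Lemma Gstar k a b w u : is_alpha_s e s t k a -> is_beta_s e s t k b ->
  (forall g n, g 0 = s -> g n = w -> W e g n -> k < n) ->
  (w < a \/ b < w)%O -> e w u -> (a <= u <= b)%O -> e w a \/ e w b.
Proof.
move=> Ha Hb dw wo ewu hu.
have [ra _] := proj1 (alphaE k a) Ha.
have [rb _] := proj1 (betaE k b) Hb.
have [gA [nA [gA0 gAn nAk WA rA]]] := rs_walk2 ra.
have [gB [nB [gB0 gBn nBk WB rB]]] := rs_walk2 rb.
have hA : forall i, i <= nA -> (a <= gA i <= b)%O.
  by move=> i Hi; apply: rs_hull Ha Hb (proj1 (rA i Hi)).
have hB : forall i, i <= nB -> (a <= gB i <= b)%O.
  by move=> i Hi; apply: rs_hull Ha Hb (proj1 (rB i Hi)).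
have onwalk : forall g n i, g 0 = s -> W e g n -> n <= k -> i <= n -> e w (g i) -> i = n.
  move=> g n i g0 Wg nk Hi ewg.
  have : rch i.+1 w by apply: rch_ext (rch_prefix g0 Wg Hi) _; rewrite esym.
  case=> h [m [h0 hm mi Wh]]; have := dw h m h0 hm Wh; nlia.
case: (classic (exists2 i, i <= nA & gA i = u)) => [[i Hi E]|nA'].
  left; have ewg : e w (gA i) by rewrite E.
  by rewrite -gAn -(onwalk _ _ _ gA0 WA nAk Hi ewg).
case: (classic (exists2 i, i <= nB & gB i = u)) => [[i Hi E]|nB'].
  right; have ewg : e w (gB i) by rewrite E.
  by rewrite -gBn -(onwalk _ _ _ gB0 WB nBk Hi ewg).
have nxA : forall i, i <= nA -> gA i != u.
  by move=> i Hi; apply/eqP => E; apply: nA'; exists i.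
have nxB : forall i, i <= nB -> gB i != u.
  by move=> i Hi; apply/eqP => E; apply: nB'; exists i.
have hu' : (a < u < b)%O.
  case/andP: hu => au ub; rewrite !lt_neqAle au ub !andbT.
  by rewrite -{1}gAn nxA //= eq_sym -gBn nxB.
have euw : e u w by rewrite esym.
have [z [ezw [[i Hi Ez]|[i Hi Ez]]]] := hull_cross gA0 gAn WA hA gB0 gBn WB hB nxA nxB hu' euw wo.
- left; have ewg : e w (gA i) by rewrite -Ez esym.
  by rewrite -gAn -(onwalk _ _ _ gA0 WA nAk Hi ewg).
- right; have ewg : e w (gB i) by rewrite -Ez esym.
  by rewrite -gBn -(onwalk _ _ _ gB0 WB nBk Hi ewg).
Qed.

Lemma alpha0 a : is_alpha_s e s t 0 a -> a = s.
Proof. by case/alphaE => /rs0. Qed.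
Lemma beta0 a : is_beta_s e s t 0 a -> a = s.
Proof. by case/betaE => /rs0. Qed.
Lemma alpha_rs k a : is_alpha_s e s t k a -> rs k a.
Proof. by case/alphaE. Qed.
Lemma beta_rs k a : is_beta_s e s t k a -> rs k a.
Proof. by case/betaE. Qed.

Lemma dist_back K v E : (forall g m, g 0 = s -> g m = v -> W e g m -> K < m) -> e E v ->
  forall g m, g 0 = s -> g m = E -> W e g m -> K < m.+1.
Proof.
move=> dv eEv g m g0 gm Wg; apply: (dv (ext1 g m v)).
- by rewrite /ext1.
- by rewrite /ext1 ltnn.
- by apply: ext1_W => //; rewrite gm.
Qed.

Lemma Good n : forall v, (forall g m, g 0 = s -> g m = v -> W e g m -> n < m) ->
  (forall a b, is_alpha_s e s t n a -> is_beta_s e s t n b -> (v < a \/ b < v)%O) ->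
  (exists u, rs n u /\ e v u) ->
  exists g, [/\ g 0 = s, g n.+1 = v, W e g n.+1 &
    forall m, m <= n -> is_alpha_s e s t m (g m) \/ is_beta_s e s t m (g m)].
Proof.
elim: n => [|n IH] v dv ov [u [ru evu]].
- have [a Ha] := ex_alpha 0; have [b Hb] := ex_beta 0.
  have hu := rs_hull Ha Hb ru.
  have eE : e v s.
    by case: (Gstar Ha Hb dv (ov a b Ha Hb) evu hu); [rewrite (alpha0 Ha) | rewrite (beta0 Hb)].
  exists (fun i => if i == 0 then s else v); split => //.
  + by move=> i; rewrite ltnS leqn0 => /eqP ->; rewrite esym.
  + by move=> m; rewrite leqn0 => /eqP ->; left; rewrite -{2}(alpha0 Ha).
- have [a Ha] := ex_alpha n.+1; have [b Hb] := ex_beta n.+1.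
  have hu := rs_hull Ha Hb ru.
  have [E [evE HE]] : exists E, e v E /\ (is_alpha_s e s t n.+1 E \/ is_beta_s e s t n.+1 E).
    by case: (Gstar Ha Hb dv (ov a b Ha Hb) evu hu) => H; [exists a; split => //; left | exists b; split => //; right].
  have rE : rs n.+1 E by case: HE => [/alpha_rs|/beta_rs].
  have dE : forall g m, g 0 = s -> g m = E -> W e g m -> n < m.
    move=> g m g0 gm Wg; have := dist_back dv (_ : e E v) g0 gm Wg.
    by rewrite esym => /(_ evE).
  have nE : forall w, rch n w -> E != w.
    move=> w [g [m [g0 gm mn Wg]]]; apply/eqP => Ew; rewrite -Ew in gm.
    have := dE g m g0 gm Wg; nlia.
  have ov' : forall a' b', is_alpha_s e s t n a' -> is_beta_s e s t n b' -> (E < a' \/ b' < E)%O.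
    move=> a' b' Ha' Hb'.
    case: HE => HE.
    + left; have ra' := alpha_rs Ha'.
      have le := proj2 (proj1 (alphaE _ _) HE) a' (rs_mono ra' (leqnSn n)).
      by rewrite lt_neqAle le andbT (nE _ (rs_rch ra')).
    + right; have rb' := beta_rs Hb'.
      have le := proj2 (proj1 (betaE _ _) HE) b' (rs_mono rb' (leqnSn n)).
      by rewrite lt_neqAle le andbT eq_sym (nE _ (rs_rch rb')).
  have [gE [mE [gE0 gEm mEn WE rgE]]] := rs_walk rE.
  have mE1 : mE = n.+1 by have := dE gE mE gE0 gEm WE; nlia.
  subst mE.
  have eu' : e E (gE n) by rewrite -gEm esym; apply: WE.
  have [g [g0 gn Wg Hg]] := IH E dE ov' (ex_intro _ (gE n) (conj (rgE n (leqnSn n)) eu')).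
  exists (ext1 g n.+1 v); split.
  + by rewrite /ext1.
  + by rewrite /ext1 ltnn.
  + by apply: ext1_W => //; rewrite gn esym.
  + move=> m; rewrite leq_eqVlt => /orP [/eqP ->|Hm].
    * by rewrite /ext1 leqnn gn.
    * by rewrite /ext1 ltnW //; apply: Hg.
Qed.

Lemma Ca f R : SP f -> maxidx f R -> forall j, j < R -> (f j <= t)%O.
Proof.
move=> Sf [Rd Rmax].
have Sf' := Sf; case: Sf' => f0 fd Wf.
suff H : forall j, j < R -> forall i, i <= j -> (f i <= t)%O.
  by move=> j Hj; apply: (H j Hj).
elim=> [|j IH] HjR i Hi.
  by move: Hi; rewrite leqn0 => /eqP ->; rewrite f0 ltW.
have pre : forall i, i <= j -> (f i <= t)%O by apply: IH; nlia.
rewrite leq_eqVlt in Hi; case/orP: Hi => [/eqP ->|Hi]; last by apply: pre; nlia.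
rewrite leNgt; apply/negP => tJ.
have [A HA] := ex_alpha j.
have rA := alpha_rs HA.
have Amin := proj2 (proj1 (alphaE _ _) HA).
have jd : j <= dd by nlia.
have rsf : forall i, i <= j -> rs j (f i).
  move=> i' Hi'; apply: rs_mono (rs_prefix f0 (W_le Wf jd) pre Hi') _; nlia.
have Af : forall i, i <= j -> (A <= f i)%O by move=> i' Hi'; apply: Amin; apply: rsf.
have tA : (A < t)%O.
  rewrite lt_neqAle (rs_le rA) andbT; apply/eqP => E.
  have := F0 Sf (leqnn dd) (_ : rch j (f dd)); rewrite fd -E => /(_ (rs_rch rA)); nlia.
have fRJ : (f j.+1 < f R)%O.
  rewrite lt_neqAle Rmax ?andbT; last by nlia.
  by apply/eqP => E; have := SP_inj Sf (_ : j.+1 <= dd) Rd E; nlia.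
have h0 : (fun i => ~~ (A < f (R + i) < f j.+1)%O) 0.
  by rewrite /= addn0 negb_and -!leNgt (ltW fRJ) orbT.
have hn : ~~ (fun i => ~~ (A < f (R + i) < f j.+1)%O) (dd - R).
  rewrite /= negbK (_ : R + (dd - R) = dd); last by nlia.
  by rewrite fd tA tJ.
clear i.
have [i [i1 i2 i3]] := bivt (h := fun i => ~~ (A < f (R + i) < f j.+1)%O) (n := dd - R) h0 hn.
rewrite /= negbK addnS in i3; rewrite /= in i2.
have ya : (f (R + i) < A \/ f j.+1 < f (R + i))%O.
  apply: out_hull i2.
  - apply/eqP => E; have := F0 Sf (_ : R + i <= dd) (_ : rch j (f (R + i))).
    rewrite E => /(_ _ (rs_rch rA)); nlia.
  - by apply/eqP => E; have := SP_inj Sf (_ : R + i <= dd) (_ : j.+1 <= dd) E; nlia.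
have exy : e (f (R + i).+1) (f (R + i)) by rewrite esym; apply: Wf; nlia.
have xs : f (R + i).+1 != s.
  by rewrite -f0; apply/eqP => E; have := SP_inj Sf (_ : (R + i).+1 <= dd) (_ : 0 <= dd) E; nlia.
have nxf : forall i', i' <= j.+1 -> f i' != f (R + i).+1.
  by move=> i' Hi'; apply/eqP => E; have := SP_inj Sf (_ : i' <= dd) (_ : (R + i).+1 <= dd) E; nlia.
have [gA [nA [gA0 gAn nAj WA rgA]]] := rs_walk2 rA.
have rchA : forall i', i' <= nA -> rch j (gA i').
  by move=> i' Hi'; apply: rch_mono (proj2 (rgA i' Hi')) _; nlia.
have hA : forall i', i' <= nA -> (A <= gA i' <= t)%O.
  by move=> i' Hi'; rewrite (Amin _ (proj1 (rgA i' Hi'))) (rs_le (proj1 (rgA i' Hi'))).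
have nxA : forall i', i' <= nA -> gA i' != f (R + i).+1.
  move=> i' Hi'; apply/eqP => E; have := F0 Sf (_ : (R + i).+1 <= dd) (_ : rch j (f (R + i).+1)).
  rewrite -E => /(_ _ (rchA i' Hi')); nlia.
have contra_j : forall z, rch j z -> e z (f (R + i)) -> False.
  move=> z rz ez; have := F0e Sf (_ : R + i <= dd) rz ez; nlia.
case/andP: i3 => Ax xJ.
case: (ltgtP s (f (R + i).+1)) => [sx|xs'|sx]; last by rewrite sx eqxx in xs.
- have Hx : (f 0 < f (R + i).+1 < f j.+1)%O by rewrite f0 sx xJ.
  have Jd : j.+1 <= dd by nlia.
  have [C1 C2] := cross (W_le Wf Jd) nxf (or_introl Hx) exy.
  case: ya => ya.
  + have yall : forall i', i' <= j.+1 -> (f (R + i) < f i')%O.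
      move=> i' Hi'; rewrite leq_eqVlt in Hi'; case/orP: Hi' => [/eqP ->|Hi'].
      - exact: lt_trans ya (lt_trans tA tJ).
      - exact: lt_le_trans ya (Af i' _).
    have [i' [Hi' _ ei']] := C2 yall.
    have : R + i <= i'.+1.
      apply: F0e Sf _ (SP_rch Sf _) _; [nlia | nlia | by rewrite esym].
    move=> Hle; have i0 : i = 0 by nlia.
    rewrite i0 addn0 in ya.
    by have := lt_trans ya (lt_trans tA (lt_trans tJ fRJ)); rewrite ltxx.
  + have yall : forall i', i' <= j.+1 -> (f i' < f (R + i))%O.
      move=> i' Hi'; rewrite leq_eqVlt in Hi'; case/orP: Hi' => [/eqP ->|Hi'] //.
      exact: le_lt_trans (pre i' _) (lt_trans tJ ya).
    have [i' [Hi' fx ei']] := C1 yall.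
    have i'j : i' <= j.
      rewrite leq_eqVlt in Hi'; case/orP: Hi' => [/eqP E|]; last by [].
      by rewrite E in fx; have := lt_trans fx xJ; rewrite ltxx.
    by apply: (contra_j (f i')) => //; apply: rch_mono (SP_rch Sf _) _; nlia.
- have Hx : (gA nA < f (R + i).+1 < gA 0)%O by rewrite gAn gA0 Ax xs'.
  have [C1 C2] := cross WA nxA (or_intror Hx) exy.
  case: ya => ya.
  + have [i' [Hi' _ ei']] := C2 (fun i' Hi' => lt_le_trans ya (proj1 (andP (hA i' Hi')))).
    by apply: (contra_j (gA i') (rchA i' Hi')); rewrite esym.
  + have [i' [Hi' _ ei']] := C1 (fun i' Hi' => le_lt_trans (proj2 (andP (hA i' Hi'))) (lt_trans tJ ya)).
    exact: (contra_j (gA i') (rchA i' Hi')).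
Qed.

Lemma rsf f R j k : SP f -> maxidx f R -> j <= k -> k < R -> rs k (f j).
Proof.
move=> Sf HR jk kR; have Sf' := Sf; case: Sf' => f0 fd Wf.
have pre := Ca Sf HR.
have kd : k <= dd by case: HR => Rd _; nlia.
apply: rs_mono (rs_prefix f0 (W_le Wf kd) (fun j' Hj' => pre j' _) jk) jk; nlia.
Qed.

Lemma M2 f L R i : SP f -> minidx f L -> maxidx f R -> L < i -> i < R ->
  is_beta_s e s t i (f i).
Proof.
move=> Sf [Ld Lmin] HR Li iR.
have Sf' := Sf; case: Sf' => f0 fd Wf.
have [Rd Rmax] := HR.
apply/betaE; split; first exact: rsf Sf HR (leqnn i) iR.
have [b Hb] := ex_beta i.
have [rb bmax] := proj1 (betaE _ _) Hb.
suff bfi : (b <= f i)%O by move=> w rw; apply: le_trans (bmax w rw) bfi.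
rewrite leNgt; apply/negP => fib.
move: Li iR fib; case: i Hb rb bmax => [|k] Hb rb bmax Li iR fib; first by [].
have [a0 Ha0] := ex_alpha k; have [b0 Hb0] := ex_beta k.
have a0L : (a0 <= f L)%O.
  by apply: (proj2 (proj1 (alphaE _ _) Ha0)); apply: rsf Sf HR _ _; nlia.
have k1d : k.+1 <= dd by nlia.
have b0f : (b0 < f k.+1)%O.
  case: (E1 Sf (ltnSn k) k1d Ha0 Hb0) => H //.
  by have := lt_le_trans H (le_trans a0L (Lmin _ k1d)); rewrite ltxx.
have [gb [nb [gb0 gbn nbk Wb rgb]]] := rs_walk rb.
have nbk1 : nb = k.+1.
  apply/eqP; rewrite eqn_leq nbk /= ltnNge; apply/negP => nbk'.
  have : (b <= b0)%O.
    apply: (proj2 (proj1 (betaE _ _) Hb0)); rewrite -gbn.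
    by apply: rs_mono (rgb nb (leqnn _)) nbk'.
  by move=> bb0; have := lt_trans (le_lt_trans bb0 b0f) fib; rewrite ltxx.
subst nb.
have ub0 : (gb k <= b0)%O by apply: (proj2 (proj1 (betaE _ _) Hb0)); apply: rgb.
have eub : e (gb k) b by rewrite -gbn; apply: Wb.
have k2d : k.+2 <= dd by nlia.
have [a1 Ha1] := ex_alpha k.+1.
have a1L : (a1 <= f L)%O.
  by apply: (proj2 (proj1 (alphaE _ _) Ha1)); apply: rsf Sf HR _ _; nlia.
have bf2 : (b < f k.+2)%O.
  case: (E1 Sf (ltnSn k.+1) k2d Ha1 Hb) => H //.
  by have := lt_le_trans H (le_trans a1L (Lmin _ k2d)); rewrite ltxx.
have eu2 : e (gb k) (f k.+2).
  apply: (HX (le_lt_trans ub0 b0f) fib bf2 eub); apply: Wf; nlia.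
have rchu : rch k (gb k) by apply: rs_rch; apply: rgb.
have := F0e Sf k2d rchu eu2; nlia.
Qed.

Lemma ext_rs i v : is_alpha_s e s t i v \/ is_beta_s e s t i v -> rs i v.
Proof. by case=> [/alpha_rs|/beta_rs]. Qed.

Lemma fL_lt f L a2 b2 k : SP f -> minidx f L -> k < L -> L <= dd ->
  is_alpha_s e s t k a2 -> is_beta_s e s t k b2 -> (f L < a2)%O.
Proof.
move=> Sf [_ Lmin] kL Ld Ha Hb.
have Sf' := Sf; case: Sf' => f0 fd Wf.
case: (E1 Sf kL Ld Ha Hb) => // H.
have fLs : (f L <= s)%O by rewrite -f0; apply: Lmin.
have sb2 : (s <= b2)%O by apply: (proj2 (proj1 (betaE _ _) Hb)); apply: rs_s.
by have := lt_le_trans H (le_trans fLs sb2); rewrite ltxx.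
Qed.

Lemma Step1 f L R : SP f -> minidx f L -> maxidx f R -> L < R ->
  exists f1, [/\ SP f1, (forall i, L < i -> f1 i = f i),
    (forall i, i <= L -> is_alpha_s e s t i (f1 i) \/ is_beta_s e s t i (f1 i)),
    minidx f1 L & maxidx f1 R].
Proof.
move=> Sf HL HR LR.
have Sf' := Sf; case: Sf' => f0 fd Wf.
have [Ld Lmin] := HL; have [Rd Rmax] := HR.
case: L HL Ld Lmin LR => [|l] HL Ld Lmin LR.
  exists f; split; [by []|by []| |by []|by []].
  move=> i; rewrite leqn0 => /eqP ->; left.
  by have [a Ha] := ex_alpha 0; move: (Ha); rewrite (alpha0 Ha) f0.
have [a Ha] := ex_alpha l.+1.
have [ra amin] := proj1 (alphaE _ _) Ha.
have [bL HbL] := ex_beta l.+1.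
have fLrs : rs l.+1 (f l.+1) by apply: rsf Sf HR (leqnn _) LR.
have afL : (a <= f l.+1)%O by apply: amin.
have [a' Ha'] := ex_alpha l; have [b' Hb'] := ex_beta l.
have fLa' : (f l.+1 < a')%O by apply: fL_lt Sf HL (ltnSn l) Ld Ha' Hb'.
have aa' : (a < a')%O by apply: le_lt_trans afL fLa'.
have [ga [na [ga0 gan nal Wa rga]]] := rs_walk ra.
have nal1 : na = l.+1.
  apply/eqP; rewrite eqn_leq nal /= ltnNge; apply/negP => nal'.
  have : (a' <= a)%O.
    apply: (proj2 (proj1 (alphaE _ _) Ha')); rewrite -gan.
    by apply: rs_mono (rga na (leqnn _)) nal'.
  by rewrite leNgt aa'.
subst na.
have rsu : rs l (ga l) by apply: rga.
have a'u : (a' <= ga l)%O by apply: (proj2 (proj1 (alphaE _ _) Ha')).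
have ubL : (ga l <= bL)%O.
  by apply: (proj2 (proj1 (betaE _ _) HbL)); apply: rs_mono rsu _.
have eau : e a (ga l) by rewrite -gan esym; apply: Wa.
have L1d : l.+2 <= dd by nlia.
have bLf : (bL < f l.+2)%O.
  case: (E1 Sf (ltnSn l.+1) L1d Ha HbL) => H //.
  by have := lt_le_trans H (le_trans afL (Lmin _ L1d)); rewrite ltxx.
have ea2 : e a (f l.+2).
  case: (eqVneq a (f l.+1)) => [->|naf]; first by apply: Wf; nlia.
  have af : (a < f l.+1)%O by rewrite lt_neqAle naf afL.
  apply: (HX af (lt_le_trans fLa' a'u) (le_lt_trans ubL bLf) eau); apply: Wf; nlia.
have da : forall g m, g 0 = s -> g m = a -> W e g m -> l < m.
  move=> g m g0 gm Wg.
  have dv : forall g' m', g' 0 = s -> g' m' = f l.+2 -> W e g' m' -> l.+1 < m'.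
    by move=> g' m' g'0 g'm Wg'; apply: F0 Sf L1d _; exists g', m'; split.
  have := dist_back dv ea2 g0 gm Wg; nlia.
have ova : forall a2 b2, is_alpha_s e s t l a2 -> is_beta_s e s t l b2 -> (a < a2 \/ b2 < a)%O.
  by move=> a2 b2 Ha2 Hb2; left; apply: le_lt_trans afL (fL_lt Sf HL (ltnSn l) Ld Ha2 Hb2).
have [g [g0 gL Wg Hg]] := Good da ova (ex_intro _ (ga l) (conj rsu eau)).
exists (fun i => if i <= l.+1 then g i else f i); split.
- split; first by rewrite leq0n.
  + by rewrite leqNgt (_ : l.+1 < dd) //; nlia.
  + move=> i Hi; case: (ltngtP i l.+1) => [il|li|->].
    * by apply: Wg.
    * by apply: Wf.
    * by rewrite gL.
- by move=> i Hi; rewrite leqNgt Hi.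
- move=> i Hi; rewrite Hi; rewrite leq_eqVlt in Hi; case/orP: Hi => [/eqP ->|Hi].
  + by left; rewrite gL.
  + by apply: Hg.
- split => // i Hi; rewrite leqnn gL.
  case: ifP => Hi'.
  + rewrite leq_eqVlt in Hi'; case/orP: Hi' => [/eqP ->|Hi']; first by rewrite gL.
    apply: ltW; apply: lt_le_trans aa' _.
    apply: (proj2 (proj1 (alphaE _ _) Ha')); exact: rs_mono (ext_rs (Hg i Hi')) Hi'.
  + by apply: le_trans afL (Lmin _ Hi).
- split => // i Hi; rewrite (leqNgt R) LR /=.
  have tfR : (t <= f R)%O by rewrite -fd; apply: Rmax.
  case: ifP => Hi'; last by apply: Rmax.
  apply: le_trans tfR; rewrite leq_eqVlt in Hi'; case/orP: Hi' => [/eqP ->|Hi'].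
  + by rewrite gL; apply: rs_le ra.
  + exact: rs_le (ext_rs (Hg i Hi')).
Qed.

Lemma StepR f L R : SP f -> minidx f L -> maxidx f R ->
  exists f1, [/\ SP f1, (forall i, R <= i -> f1 i = f i),
    (forall i, i < R -> is_alpha_s e s t i (f1 i) \/ is_beta_s e s t i (f1 i)),
    maxidx f1 R & (R < L -> minidx f1 L)].
Proof.
move=> Sf HL HR.
have Sf' := Sf; case: Sf' => f0 fd Wf.
have [Ld Lmin] := HL; have [Rd Rmax] := HR.
case: R HR Rd Rmax => [|r] HR Rd Rmax.
  by have := Rmax _ (leqnn dd); rewrite fd f0 leNgt Hst.
have dv : forall g m, g 0 = s -> g m = f r.+1 -> W e g m -> r < m.
  by move=> g m g0 gm Wg; apply: F0 Sf Rd _; exists g, m; split.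
have ov : forall a b, is_alpha_s e s t r a -> is_beta_s e s t r b -> (f r.+1 < a \/ b < f r.+1)%O.
  by move=> a b Ha Hb; apply: E1 Sf (ltnSn r) Rd Ha Hb.
have ru : rs r (f r) by apply: rsf Sf HR (leqnn r) (ltnSn r).
have eu : e (f r.+1) (f r) by rewrite esym; apply: Wf; nlia.
have [g [g0 gR Wg Hg]] := Good dv ov (ex_intro _ (f r) (conj ru eu)).
have tfR : (t <= f r.+1)%O by rewrite -fd; apply: Rmax.
exists (fun i => if i < r.+1 then g i else f i); split.
- split; first by rewrite ltn0Sn.
  + by rewrite ltnNge Rd.
  + move=> i Hi; case: (ltngtP i r) => [il|li|->].
    * by rewrite !ltnS (ltnW il) il; apply: Wg; nlia.
    * rewrite !ltnS.
      have -> : (i <= r) = false by apply/negbTE; rewrite -ltnNge.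
      have -> : (i.+1 <= r) = false by apply/negbTE; rewrite -ltnNge; exact: ltnW li.
      by apply: Wf.
    * by rewrite !ltnS leqnn ltnn -gR; apply: Wg.
- by move=> i Hi; rewrite ltnNge Hi.
- by move=> i Hi; rewrite Hi; apply: Hg.
- split => // i Hi; rewrite ltnn.
  case: ifP => Hi'; last by apply: Rmax.
  by apply: le_trans tfR; apply: rs_le (ext_rs (Hg i Hi')).
- move=> RL; split => // i Hi; rewrite ltnNge (ltnW RL) /=.
  case: ifP => Hi'; last by apply: Lmin.
  have [a' Ha'] := ex_alpha r; have [b' Hb'] := ex_beta r.
  have fLa' := fL_lt Sf HL (_ : r < L) Ld Ha' Hb'.
  apply: ltW; apply: lt_le_trans (fLa' _) _; first by nlia.
  apply: (proj2 (proj1 (alphaE _ _) Ha')); exact: rs_mono (ext_rs (Hg i Hi')) Hi'.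
Qed.
End Main.

Lemma W_rev (T : Type) (e : rel T) f n : symmetric e -> W e f n -> W e (fun i => f (n - i)) n.
Proof.
move=> esym Wf i Hi.
have -> : n - i = (n - i.+1).+1 by nlia.
rewrite esym; apply: Wf; nlia.
Qed.

Lemma SP_rev (disp : Order.disp_t) (T : finOrderType disp) (e : rel T) a b n f :
  symmetric e -> SP e a b n f -> SP e b a n (fun i => f (n - i)).
Proof.
move=> esym [f0 fn Wf]; split.
- by rewrite subn0.
- by rewrite subnn.
- exact: W_rev.
Qed.

Lemma ex_maxidx (disp : Order.disp_t) (T : finOrderType disp) (f : nat -> T) n :
  exists R, maxidx n f R.
Proof.
elim: n => [|n [R [Rn Rmax]]].
  by exists 0; split => // i; rewrite leqn0 => /eqP ->.
case: (leP (f n.+1) (f R)) => H.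
- exists R; split => [|i]; first by nlia.
  rewrite leq_eqVlt => /orP [/eqP ->|Hi] //; exact: Rmax.
- exists n.+1; split => // i.
  rewrite leq_eqVlt => /orP [/eqP ->|Hi] //.
  exact: le_trans (Rmax i Hi) (ltW H).
Qed.

Lemma ex_minidx (disp : Order.disp_t) (T : finOrderType disp) (f : nat -> T) n :
  exists L, minidx n f L.
Proof. exact: (@ex_maxidx _ T^d f n). Qed.

Section Dual.
Variables (disp : Order.disp_t) (T : finOrderType disp) (e : rel T).
Hypothesis esym : symmetric e.
Hypothesis HX : X_property e.
Variables (s t : T).
Hypothesis Hst : (s < t)%O.
Variable dd : nat.
Hypothesis dmin : forall g n, g 0 = s -> g n = t -> W e g n -> dd <= n.

Lemma HXd : X_property (T:=T^d) e.
Proof.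
move=> p q r s' pq qr rs' epr eqs.
have H := @HX s' r q p rs' qr pq (_ : e s' q) (_ : e r p).
by rewrite esym; apply: H; rewrite esym.
Qed.

Lemma Htsd : (t < s :> T^d)%O.
Proof. exact: Hst. Qed.

Lemma dmind : forall g n, g 0 = t -> g n = s -> W e g n -> dd <= n.
Proof.
move=> g n g0 gn Wg; apply: (dmin (g := fun i => g (n - i))).
- by rewrite subn0.
- by rewrite subnn.
- exact: W_rev.
Qed.

Lemma minidx_d (f : nat -> T) L : L <= dd -> minidx dd f L -> maxidx (T:=T^d) dd (fun i => f (dd - i)) (dd - L).
Proof.
move=> Ld [_ Lmin]; split; first by nlia.
move=> i Hi; rewrite /= (_ : dd - (dd - L) = L); last by nlia.
exact: (Lmin (dd - i) (leq_subr _ _)).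
Qed.

Lemma maxidx_d (f : nat -> T) R : R <= dd -> maxidx dd f R -> minidx (T:=T^d) dd (fun i => f (dd - i)) (dd - R).
Proof.
move=> Rd [_ Rmax]; split; first by nlia.
move=> i Hi; rewrite /= (_ : dd - (dd - R) = R); last by nlia.
exact: (Rmax (dd - i) (leq_subr _ _)).
Qed.

Lemma d_minidx (f : nat -> T) L : L <= dd -> maxidx (T:=T^d) dd f (dd - L) -> minidx dd (fun i => f (dd - i)) L.
Proof.
move=> Ld [_ Lmax]; split => // i Hi.
exact: (Lmax (dd - i) (leq_subr _ _)).
Qed.

Lemma d_maxidx (f : nat -> T) R : R <= dd -> minidx (T:=T^d) dd f (dd - R) -> maxidx dd (fun i => f (dd - i)) R.
Proof.
move=> Rd [_ Rmin]; split => // i Hi.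
exact: (Rmin (dd - i) (leq_subr _ _)).
Qed.

Lemma StepL f L R : SP e s t dd f -> minidx dd f L -> maxidx dd f R ->
  exists f2, [/\ SP e s t dd f2, (forall i, i <= L -> f2 i = f i),
    (forall i, L < i -> i <= dd -> is_alpha_t e s t (dd - i) (f2 i) \/ is_beta_t e s t (dd - i) (f2 i)),
    minidx dd f2 L & (R < L -> maxidx dd f2 R)].
Proof.
move=> Sf HL HR.
have Ld : L <= dd by case: HL.
have Rd : R <= dd by case: HR.
have [f1 [S1 E1 X1 M1 N1]] := @StepR _ T^d e esym HXd t s Htsd dd dmind _ _ _ (SP_rev esym Sf) (maxidx_d Rd HR) (minidx_d Ld HL).
exists (fun i => f1 (dd - i)); split.
- by have := SP_rev esym S1.
- move=> i Hi; rewrite E1; last by nlia.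
  by congr f; nlia.
- by move=> i Li id; apply: X1; nlia.
- exact: d_minidx Ld M1.
- move=> RL; apply: d_maxidx Rd (N1 _); nlia.
Qed.

Lemma Step1' f L R : SP e s t dd f -> minidx dd f L -> maxidx dd f R -> L < R ->
  exists f2, [/\ SP e s t dd f2, (forall i, i < R -> f2 i = f i),
    (forall i, R <= i -> i <= dd -> is_alpha_t e s t (dd - i) (f2 i) \/ is_beta_t e s t (dd - i) (f2 i)),
    minidx dd f2 L & maxidx dd f2 R].
Proof.
move=> Sf HL HR LR.
have Ld : L <= dd by case: HL.
have Rd : R <= dd by case: HR.
have LRd : dd - R < dd - L by nlia.
have [f1 [S1 E1 X1 M1 N1]] := @Step1 _ T^d e esym HXd t s Htsd dd dmind _ _ _ (SP_rev esym Sf) (maxidx_d Rd HR) (minidx_d Ld HL) LRd.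
exists (fun i => f1 (dd - i)); split.
- by have := SP_rev esym S1.
- move=> i Hi; rewrite E1; last by nlia.
  by congr f; nlia.
- by move=> i Ri id; apply: X1; nlia.
- exact: d_minidx Ld N1.
- exact: d_maxidx Rd M1.
Qed.

Lemma M3 f L R i : SP e s t dd f -> minidx dd f L -> maxidx dd f R -> L < i -> i < R ->
  is_beta_t e s t (dd - i) (f i).
Proof.
move=> Sf HL HR Li iR.
have Ld : L <= dd by case: HL.
have Rd : R <= dd by case: HR.
have h1 : dd - R < dd - i by nlia.
have h2 : dd - i < dd - L by nlia.
have := @M2 _ T^d e esym HXd t s Htsd dd dmind _ _ _ (dd - i) (SP_rev esym Sf) (maxidx_d Rd HR) (minidx_d Ld HL) h1 h2.
by rewrite (_ : dd - (dd - i) = i); last by nlia.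
Qed.

Lemma main_fun f0 : SP e s t dd f0 -> exists f R L, [/\ SP e s t dd f, maxidx dd f R, minidx dd f L,
  (forall i, i < R -> is_alpha_s e s t i (f i) \/ is_beta_s e s t i (f i)) &
  (forall i, L < i -> i <= dd -> is_alpha_t e s t (dd - i) (f i) \/ is_beta_t e s t (dd - i) (f i))].
Proof.
move=> S0.
have [R HR] := ex_maxidx f0 dd.
have [L HL] := ex_minidx f0 dd.
have [f00 f0d _] := S0.
have LR : L != R.
  apply/eqP => E; subst L.
  have := le_trans (proj2 HR dd (leqnn dd)) (proj2 HL 0 (leq0n _)).
  by rewrite f0d f00 leNgt Hst.
case: (ltngtP L R) => [LR'|RL|E]; last by rewrite E eqxx in LR.
- have [f1 [S1 E1 X1 M1 N1]] := Step1 esym HX Hst dmin S0 HL HR LR'.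
  have [f2 [S2 E2 X2 M2' N2]] := Step1' S1 M1 N1 LR'.
  exists f2, R, L; split => //.
  + move=> i iR; rewrite E2 //.
    case: (leqP i L) => iL; first exact: X1.
    right; exact (M2 esym HX Hst dmin S1 M1 N1 iL iR).
  + move=> i Li id; case: (leqP R i) => Ri; first exact: X2.
    right; exact (M3 S2 M2' N2 Li Ri).
- have [f1 [S1 E1 X1 M1 N1]] := StepR esym HX Hst dmin S0 HL HR.
  have [f2 [S2 E2 X2 M2' N2]] := StepL S1 (N1 RL) M1.
  exists f2, R, L; split => //.
  + exact: N2.
  + by move=> i iR; rewrite E2; [exact: X1 | nlia].
Qed.

End Dual.

Lemma foldr_max_mem (disp : Order.disp_t) (T : finOrderType disp) (x : T) l :
  foldr Order.max x l \in x :: l.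
Proof.
elim: l => [|a l IH] /=; first by rewrite inE.
rewrite maxEle; case: ifP => _; last by rewrite !inE eqxx orbT.
by move: IH; rewrite !inE => /orP [->|->]; rewrite ?orbT.
Qed.

Lemma foldr_max_ub (disp : Order.disp_t) (T : finOrderType disp) (x : T) l y :
  y \in x :: l -> (y <= foldr Order.max x l)%O.
Proof.
elim: l => [|a l IH] /=; first by rewrite inE => /eqP ->; rewrite lexx.
rewrite !inE => /orP [Hx|/orP [/eqP ->|H]]; rewrite le_max.
- by rewrite IH ?orbT // inE Hx.
- by rewrite lexx.
- by rewrite IH ?orbT // inE H orbT.
Qed.

Lemma foldr_min_mem (disp : Order.disp_t) (T : finOrderType disp) (x : T) l :
  foldr Order.min x l \in x :: l.
Proof.
elim: l => [|a l IH] /=; first by rewrite inE.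
rewrite minEle; case: ifP => _; first by rewrite !inE eqxx orbT.
by move: IH; rewrite !inE => /orP [->|->]; rewrite ?orbT.
Qed.

Lemma foldr_min_lb (disp : Order.disp_t) (T : finOrderType disp) (x : T) l y :
  y \in x :: l -> (foldr Order.min x l <= y)%O.
Proof.
elim: l => [|a l IH] /=; first by rewrite inE => /eqP ->; rewrite lexx.
rewrite !inE => /orP [Hx|/orP [/eqP ->|H]]; rewrite ge_min.
- by rewrite IH ?orbT // inE Hx.
- by rewrite lexx.
- by rewrite IH ?orbT // inE H orbT.
Qed.

Local Open Scope order_scope.

Theorem lemma11 (d : Order.disp_t) (T : finOrderType d) (e : rel T)
  (Hg : simple_graph e) (HX : X_property e) (s t : T) (Hst : s < t)
  (dstar : nat) (Hd : is_dist e s t dstar) :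
  exists q : seq T,
    [/\ path e s q, last s q = t, size q = dstar,
        (forall i : nat, (i < righti s q)%N ->
           is_alpha_s e s t i (nth s (s :: q) i) \/
           is_beta_s e s t i (nth s (s :: q) i))
      & (forall i : nat, (lefti s q < i)%N -> (i <= dstar)%N ->
           is_alpha_t e s t (dstar - i) (nth s (s :: q) i) \/
           is_beta_t e s t (dstar - i) (nth s (s :: q) i))].
Proof.
have esym : symmetric e by case: Hg.
case: Hd => [[q0 [pq0 lq0 sq0]] minq].
have dmin : forall g n, g 0%N = s -> g n = t -> W e g n -> (dstar <= n)%N.
  move=> g n g0 gn Wg.
  have := minq (mkq g n) (mkq_path g0 Wg) (_ : last s (mkq g n) = t).
  by rewrite mkq_size; apply; rewrite mkq_last.
have S0 : SP e s t dstar (fq s q0).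
  split; [by [] | by rewrite -sq0 fq_last | by rewrite -sq0; apply: fq_W].
have [f [R [L [Sf HR HL XR XL]]]] := main_fun esym HX Hst dmin S0.
have Sf' := Sf; case: Sf' => f0 fd Wf.
have Rd : (R <= dstar)%N by case: HR.
have Ld : (L <= dstar)%N by case: HL.
set q := mkq f dstar.
have nthq : forall i, (i <= dstar)%N -> nth s (s :: q) i = f i.
  by move=> i Hi; apply: mkq_nth.
have sq : size (s :: q) = dstar.+1 by rewrite /= mkq_size.
have uq : uniq (s :: q).
  have -> : s :: q = map f (iota 0 dstar.+1) by rewrite /q /mkq /= f0.
  rewrite map_inj_in_uniq ?iota_uniq // => i j; rewrite !mem_iota !add0n => /andP [_ Hi] /andP [_ Hj] E.
  apply: (SP_inj dmin Sf _ _ E); nlia.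
have rR : righti s q = R.
  rewrite /righti.
  have -> : foldr Order.max s q = f R.
    apply/le_anti/andP; split.
    - have /(nthP s) [i Hi <-] := foldr_max_mem s q.
      rewrite nthq; last by rewrite sq in Hi; nlia.
      by apply: (proj2 HR); rewrite sq in Hi; nlia.
    - rewrite -(nthq R Rd); apply: foldr_max_ub; apply: mem_nth; rewrite sq; nlia.
  by rewrite -(nthq R Rd) index_uniq // sq; nlia.
have lL : lefti s q = L.
  rewrite /lefti.
  have -> : foldr Order.min s q = f L.
    apply/le_anti/andP; split.
    - rewrite -(nthq L Ld); apply: foldr_min_lb; apply: mem_nth; rewrite sq; nlia.
    - have /(nthP s) [i Hi <-] := foldr_min_mem s q.
      rewrite nthq; last by rewrite sq in Hi; nlia.
      by apply: (proj2 HL); rewrite sq in Hi; nlia.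
  by rewrite -(nthq L Ld) index_uniq // sq; nlia.
exists q; split.
- exact: mkq_path.
- by rewrite mkq_last.
- exact: mkq_size.
- move=> i; rewrite rR => Hi; rewrite nthq; [exact: XR | nlia].
- move=> i; rewrite lL => Li id; rewrite nthq //; exact: XL.
Qed.
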